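(* Let $0<x_{\rm B}<x_{\rm A}$ and $v_E=\sqrt{2/x_{\rm A}}$. The function $T_D^R:\,]-\infty,v_E[\,\to\,]0,\infty[$ is strictly convex, with ${\rm d}^2T_D^R/{\rm d}v_{\rm A}^2>0$ everywhere.
   Context: Kepler problem on a line normalized as $\ddot x=-1/x^2$ ($x>0$), center ${\rm O}$ at $x=0$. For $v_{\rm A}<v_E$, $T_D^R(v_{\rm A})$ is the first time after $t_{\rm A}$ (minus $t_{\rm A}$) at which the solution with $x(t_{\rm A})=x_{\rm A}$, $\dot x(t_{\rm A})=v_{\rm A}$ reaches $x_{\rm B}$; this happens without collision with ${\rm O}$, possibly after a culmination (maximum of $x$) when $v_{\rm A}\ge0$. These are exactly the direct (collision-free) Keplerian arcs from ${\rm A}$ to ${\rm B}$. *)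

(* Defs.v *)
From Stdlib Require Import Reals.
Open Scope R_scope.

(* Escape velocity from x_A for the normalized Kepler problem x'' = -1/x^2. *)
Definition vE (xA : R) : R := sqrt (2 / xA).

(* [kepler_sol x v tf]: x is a solution of x'' = -1/x^2 with x > 0 on the
   closed time interval [0, tf], with velocity function v = x'.
   (Time origin t_A = 0; the system is autonomous.) *)
Definition kepler_sol (x v : R -> R) (tf : R) : Prop :=
  forall s, 0 <= s <= tf ->
    0 < x s /\
    derivable_pt_lim x s (v s) /\
    derivable_pt_lim v s (- / (x s ^ 2)).

Definition first_hit (xA xB vA t : R) : Prop :=
  0 < t /\
  exists x v : R -> R,
    kepler_sol x v t /\ x 0 = xA /\ v 0 = vA /\ x t = xB /\
    (forall s, 0 < s < t -> x s <> xB).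

(* Main.v *)
Require Import Defs.
From Stdlib Require Import Reals.
From Coquelicot Require Import Coquelicot.
From Stdlib Require Import Lra Psatz ClassicalEpsilon Ranalysis5.
Open Scope R_scope.

Lemma c2d_snd (f : R -> R -> R) y z :
  continuity_2d_pt f y z -> continuous (fun t => f y t) z.
Proof.
  intros H. apply continuity_pt_filterlim.
  intros eps Heps. destruct (H (mkposreal eps Heps)) as [d Hd].
  exists d. split; [apply cond_pos|].
  intros t [_ Ht]. simpl in *. unfold R_dist in *.
  apply Hd; [rewrite Rminus_eq_0, Rabs_R0; apply cond_pos| exact Ht].
Qed.

Lemma leibniz (f df : R -> R -> R) (a b : R -> R) (x da db eps : R) :
  0 < eps ->
  (forall y t, Rabs (y - x) < eps -> Rmin (a x) (b x) - eps < t < Rmax (a x) (b x) + eps ->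
     is_derive (fun z => f z t) y (df y t) /\ continuity_2d_pt f y t /\ continuity_2d_pt df y t) ->
  is_derive a x da -> is_derive b x db ->
  is_derive (fun z => RInt (fun t => f z t) (a z) (b z)) x
     (RInt (fun t => df x t) (a x) (b x) - f x (a x) * da + f x (b x) * db).
Proof.
  intros Heps H Ha Hb.
  set (m := Rmin (a x) (b x)). set (M := Rmax (a x) (b x)).
  change (Rmin (a x) (b x)) with m in H. change (Rmax (a x) (b x)) with M in H.
  assert (Hm : m <= M) by (unfold m, M; apply Rmin_Rmax).
  assert (Ham : m <= a x <= M) by (unfold m, M; split; [apply Rmin_l|apply Rmax_l]).
  assert (Hbm : m <= b x <= M) by (unfold m, M; split; [apply Rmin_r|apply Rmax_r]).
  pose (e2 := mkposreal (eps/2) ltac:(lra)).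
  assert (HD : forall y t, Rabs (y - x) < eps -> m - eps < t < M + eps ->
     Derive (fun z => f z t) y = df y t).
  { intros y t Hy Ht. apply is_derive_unique. apply (H y t Hy Ht). }
  assert (HC : forall y t, Rabs (y - x) < eps/2 -> m - eps/2 < t < M + eps/2 ->
    continuity_2d_pt (fun u v => Derive (fun z => f z v) u) y t).
  { intros y t Hy Ht. apply continuity_2d_pt_ext_loc with (f := df).
    - exists e2. intros u v Hu Hv. simpl in Hu, Hv. symmetry. apply HD.
      + apply Rle_lt_trans with (Rabs (u - y) + Rabs (y - x)).
        replace (u - x) with ((u - y) + (y - x)) by ring. apply Rabs_triang. lra.
      + apply Rabs_def2 in Hv. lra.
    - refine (proj2 (proj2 (H y t _ _))); lra. }
  assert (Hint : forall y lo hi, Rabs (y - x) < eps -> m - eps < lo < M + eps -> m - eps < hi < M + eps ->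
     ex_RInt (fun t => f y t) lo hi).
  { intros y lo hi Hy Hlo Hhi. apply (@ex_RInt_continuous R_CompleteNormedModule). intros z Hz.
    apply c2d_snd. refine (proj1 (proj2 (H y z Hy _))).
    assert (m - eps < Rmin lo hi) by (apply Rmin_glb_lt; lra).
    assert (Rmax lo hi < M + eps) by (apply Rmax_lub_lt; lra).
    fold m M. lra. }
  assert (Hloc : forall P : R -> Prop, (forall y, Rabs (y - x) < eps/2 -> P y) -> locally x P).
  { intros P HP. exists e2. intros y Hy. apply HP. exact Hy. }
  replace (RInt (fun t => df x t) (a x) (b x)) with
     (RInt (fun t => Derive (fun u => f u t) x) (a x) (b x)).
  2:{ apply RInt_ext. intros t Ht. apply HD. rewrite Rminus_diag, Rabs_R0; lra.
      fold m M in Ht. lra. }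
  replace (RInt (fun t => Derive (fun u => f u t) x) (a x) (b x) - f x (a x) * da + f x (b x) * db)
    with (RInt (fun t => Derive (fun u => f u t) x) (a x) (b x) + - f x (a x) * da + f x (b x) * db) by ring.
  apply is_derive_RInt_param_bound_comp.
  - apply Hloc. intros y Hy. apply Hint; lra.
  - exists e2. apply Hloc. intros y Hy. simpl. apply Hint; lra.
  - exists e2. apply Hloc. intros y Hy. simpl. apply Hint; lra.
  - exact Ha.
  - exact Hb.
  - exists e2. apply Hloc. intros y Hy t Ht. simpl in Ht.
    exists (df y t). refine (proj1 (H y t _ _)). lra.
    assert (Rmin (a x - eps/2) (b x - eps/2) = m - eps/2).
    { unfold m. unfold Rmin. destruct (Rle_dec (a x) (b x)), (Rle_dec (a x - eps/2) (b x - eps/2)); lra. }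
    assert (Rmax (a x + eps/2) (b x + eps/2) = M + eps/2).
    { unfold M. unfold Rmax. destruct (Rle_dec (a x) (b x)), (Rle_dec (a x + eps/2) (b x + eps/2)); lra. }
    lra.
  - intros t Ht. apply HC. rewrite Rminus_diag, Rabs_R0; lra. fold m M in Ht. lra.
  - exists e2. intros u v Hu Hv. simpl in Hu, Hv. apply HC. lra. apply Rabs_def2 in Hv. lra.
  - exists e2. intros u v Hu Hv. simpl in Hu, Hv. apply HC. lra. apply Rabs_def2 in Hv. lra.
  - apply continuity_pt_filterlim. apply c2d_snd. refine (proj1 (proj2 (H x _ _ _))). rewrite Rminus_diag, Rabs_R0; lra. lra.
  - apply continuity_pt_filterlim. apply c2d_snd. refine (proj1 (proj2 (H x _ _ _))). rewrite Rminus_diag, Rabs_R0; lra. lra.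
Qed.
Definition DD (K y t : R) := t*t - y*y + K.
Definition F0 (K y t : R) := 4 / (DD K y t * DD K y t).
Definition F1 (K y t : R) := 16 * y / (DD K y t * DD K y t * DD K y t).
Definition F2 (K y t : R) := 16 / (DD K y t * DD K y t * DD K y t)
   + 96 * y * y / (DD K y t * DD K y t * DD K y t * DD K y t).

Ltac c2d := repeat first [ apply continuity_2d_pt_plus | apply continuity_2d_pt_minus
  | apply continuity_2d_pt_mult | apply continuity_2d_pt_opp | apply continuity_2d_pt_id1
  | apply continuity_2d_pt_id2 | apply continuity_2d_pt_const ].

Ltac nz := repeat split; repeat (apply Rmult_integral_contrapositive; split); auto.

Lemma c2d_DD K y t : continuity_2d_pt (fun u v => DD K u v) y t.
Proof. unfold DD. c2d. Qed.

Lemma F0_props K y t : DD K y t <> 0 ->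
  is_derive (fun z => F0 K z t) y (F1 K y t) /\ continuity_2d_pt (F0 K) y t /\ continuity_2d_pt (F1 K) y t.
Proof.
  intros H. split; [|split].
  - unfold F0, F1, DD in *. auto_derive. nz.
    field. auto.
  - unfold F0, Rdiv. apply continuity_2d_pt_mult. apply continuity_2d_pt_const.
    apply continuity_2d_pt_inv. apply continuity_2d_pt_mult; apply c2d_DD.
    nz.
  - unfold F1, Rdiv. apply continuity_2d_pt_mult. c2d.
    apply continuity_2d_pt_inv. repeat apply continuity_2d_pt_mult; apply c2d_DD.
    nz.
Qed.

Lemma F1_props K y t : DD K y t <> 0 ->
  is_derive (fun z => F1 K z t) y (F2 K y t) /\ continuity_2d_pt (F1 K) y t /\ continuity_2d_pt (F2 K) y t.
Proof.
  intros H. split; [|split].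
  - unfold F2, F1, DD in *. auto_derive. nz.
    field. auto.
  - unfold F1, Rdiv. apply continuity_2d_pt_mult. c2d.
    apply continuity_2d_pt_inv. repeat apply continuity_2d_pt_mult; apply c2d_DD.
    nz.
  - unfold F2, Rdiv. apply continuity_2d_pt_plus; apply continuity_2d_pt_mult; try c2d;
    (apply continuity_2d_pt_inv; [repeat apply continuity_2d_pt_mult; apply c2d_DD|
    nz]).
Qed.
Lemma box K p : 0 < K -> p < sqrt K -> exists eps, 0 < eps /\
  forall y t, Rabs (y - p) < eps -> t < p + eps -> 0 < DD K y t.
Proof.
  intros HK Hp. unfold DD.
  destruct (Rlt_or_le p 0) as [Hn|Hn].
  - exists (Rmin (-p/2) (K/(8*(-p)))). split.
    + apply Rmin_glb_lt. lra. apply Rdiv_lt_0_compat; lra.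
    + intros y t Hy Ht. set (e := Rmin (-p/2) (K/(8*(-p)))) in *.
      assert (H1 : e <= -p/2) by apply Rmin_l.
      assert (H2 : e <= K/(8*(-p))) by apply Rmin_r.
      assert (H3 : 0 < e) by (apply Rmin_glb_lt; [lra| apply Rdiv_lt_0_compat; lra]).
      assert (H4 : e * (8*(-p)) <= K).
      { apply Rmult_le_reg_r with (/(8*(-p))). apply Rinv_0_lt_compat; lra.
        rewrite Rmult_assoc, Rinv_r by lra. rewrite Rmult_1_r. exact H2. }
      apply Rabs_def2 in Hy.
      assert (t*t > (p+e)*(p+e)) by nra.
      assert (y*y < (p-e)*(p-e)) by nra.
      nra.
  - assert (HK2 : p * p < K).
    { rewrite <- (sqrt_sqrt K) by lra. assert (0 <= sqrt K) by apply sqrt_pos. nra. }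
    exists ((sqrt K - p)/2). split. lra.
    intros y t Hy Ht. apply Rabs_def2 in Hy.
    assert (0 <= sqrt K) by apply sqrt_pos.
    assert (sqrt K * sqrt K = K) by (apply sqrt_sqrt; lra).
    assert (y * y < K) by nra. nra.
Qed.

Lemma region K p : 0 < K -> p < sqrt K -> exists r, p < r /\ forall u, u < r -> 0 < DD K p u.
Proof.
  intros HK Hp. unfold DD.
  destruct (Rlt_or_le (p*p) K) as [H|H].
  - exists (p+1). split. lra. intros u _. nra.
  - assert (Hn : p < 0).
    { destruct (Rlt_or_le p 0); auto. exfalso.
      assert (0 <= sqrt K) by apply sqrt_pos.
      assert (sqrt K * sqrt K = K) by (apply sqrt_sqrt; lra). nra. }
    exists (- sqrt (p*p - K)). 
    assert (Hs : sqrt (p*p-K) * sqrt (p*p-K) = p*p - K) by (apply sqrt_sqrt; lra).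
    assert (0 <= sqrt (p*p-K)) by apply sqrt_pos.
    split.
    + assert (sqrt (p*p-K) < -p); [|lra].
      apply Rsqr_incrst_0; unfold Rsqr; try lra.
    + intros u Hu. nra.
Qed.

Definition LL c p := - sqrt (p*p + c).
Definition TT K c p := RInt (fun t => F0 K p t) (LL c p) p.
Definition T1 K c p := RInt (fun t => F1 K p t) (LL c p) p
  + 4*p/((c+K)*(c+K)*sqrt(p*p+c)) + 4/(K*K).
Definition T2 K c p := RInt (fun t => F2 K p t) (LL c p) p
  + 16*p*p/((c+K)*(c+K)*(c+K)*sqrt(p*p+c)) + 16*p/(K*K*K)
  + 4*c/((c+K)*(c+K)*(sqrt(p*p+c)*sqrt(p*p+c)*sqrt(p*p+c))).

Lemma sq_pos c p : 0 < c -> 0 < sqrt (p*p+c).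
Proof. intros; apply sqrt_lt_R0; nra. Qed.
Lemma sq_sq c p : 0 < c -> sqrt (p*p+c) * sqrt (p*p+c) = p*p+c.
Proof. intros; apply sqrt_sqrt; nra. Qed.

Lemma LL_der c p : 0 < c -> is_derive (LL c) p (- p / sqrt (p*p+c)).
Proof.
  intros Hc. unfold LL. assert (H := sq_pos c p Hc). auto_derive. nra. field. lra.
Qed.

Lemma LL_lt c p : 0 < c -> LL c p < - Rabs p.
Proof.
  intros Hc. unfold LL. assert (H := sq_pos c p Hc). assert (H2 := sq_sq c p Hc).
  assert (Rabs p < sqrt (p*p+c)); [|lra].
  apply Rsqr_incrst_0; unfold Rsqr; try lra. rewrite H2.
  rewrite <- Rabs_mult, Rabs_right by nra. lra. apply Rabs_pos.
Qed.

Lemma DD_LL K c p : 0 < c -> DD K p (LL c p) = c + K.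
Proof. intros Hc. unfold DD, LL. assert (H2 := sq_sq c p Hc). nra. Qed.

Lemma TT_der K c p : 0 < K -> 0 < c -> p < sqrt K -> is_derive (TT K c) p (T1 K c p).
Proof.
  intros HK Hc Hp. destruct (box K p HK Hp) as [eps [He Hb]].
  assert (HL := LL_lt c p Hc). assert (Hpa := Rabs_maj2 p).
  assert (Hl := leibniz (F0 K) (F1 K) (LL c) (fun z => z) p (- p / sqrt (p*p+c)) 1 eps He).
  simpl in Hl. unfold TT.
  replace (T1 K c p) with (RInt (fun t => F1 K p t) (LL c p) p - F0 K p (LL c p) * (- p / sqrt (p * p + c)) + F0 K p p * 1).
  apply Hl.
  - intros y t Hy Ht. apply F0_props. apply Rgt_not_eq. apply (Hb y t Hy).
    rewrite Rmax_right in Ht by lra. lra.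
  - apply LL_der; auto.
  - auto_derive; auto.
  - unfold T1, F0. rewrite DD_LL by auto. unfold DD.
    assert (H := sq_pos c p Hc). field. lra.
Qed.

Lemma T1_der K c p : 0 < K -> 0 < c -> p < sqrt K -> is_derive (T1 K c) p (T2 K c p).
Proof.
  intros HK Hc Hp. destruct (box K p HK Hp) as [eps [He Hb]].
  assert (HL := LL_lt c p Hc). assert (Hpa := Rabs_maj2 p).
  assert (Hl := leibniz (F1 K) (F2 K) (LL c) (fun z => z) p (- p / sqrt (p*p+c)) 1 eps He).
  simpl in Hl.
  assert (Hs := sq_pos c p Hc). assert (Hs2 := sq_sq c p Hc).
  assert (Hg : is_derive (fun z => 4*z/((c+K)*(c+K)*sqrt(z*z+c))) p
     (4*c/((c+K)*(c+K)*(sqrt(p*p+c)*sqrt(p*p+c)*sqrt(p*p+c))))).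
  { auto_derive. split; [nra|split; [apply Rgt_not_eq; repeat apply Rmult_lt_0_compat; lra|trivial]].
    set (s := sqrt (p*p+c)) in *. field_simplify_eq.
    replace (s^2) with (p*p+c) by (rewrite <- Hs2; ring). ring. split; lra. }
  assert (Hi : is_derive (fun z => RInt (fun t => F1 K z t) (LL c z) z) p
    (RInt (fun t => F2 K p t) (LL c p) p - F1 K p (LL c p) * (- p / sqrt (p * p + c)) + F1 K p p * 1)).
  { apply Hl.
    - intros y t Hy Ht. apply F1_props. apply Rgt_not_eq. apply (Hb y t Hy).
      rewrite Rmax_right in Ht by lra. lra.
    - apply LL_der; auto.
    - auto_derive; auto. }
  apply is_derive_ext with (f := fun z => plus (plus (RInt (fun t => F1 K z t) (LL c z) z)
     (4*z/((c+K)*(c+K)*sqrt(z*z+c)))) (4/(K*K))).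
  { intros z. reflexivity. }
  replace (T2 K c p) with (plus (plus (RInt (fun t => F2 K p t) (LL c p) p - F1 K p (LL c p) * (- p / sqrt (p * p + c)) + F1 K p p * 1) (4*c/((c+K)*(c+K)*(sqrt(p*p+c)*sqrt(p*p+c)*sqrt(p*p+c))))) 0).
  apply (@is_derive_plus R_AbsRing R_NormedModule). apply (@is_derive_plus R_AbsRing R_NormedModule). exact Hi. exact Hg. apply (@is_derive_const R_AbsRing R_NormedModule).
  unfold T2, F1. rewrite DD_LL by auto. unfold DD, plus; simpl. field. lra.
Qed.
Definition QQ K p u := 4/K * (u^6 + ((K - p*p) - 2*(p*p))*u^4 - (3*(p*p)*(p*p) + 6*(p*p)*(K-p*p))*u^2 + (p*p)*(p*p)*(K-p*p)) / (u^3 * (u*u+(K-p*p))^3).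
Definition RR K p u := 12*(u*u - p*p)^2/(K * DD K p u ^2 * u^4).
Lemma QQ_der K p u : 0 < K -> u <> 0 -> DD K p u <> 0 -> is_derive (QQ K p) u (F2 K p u - RR K p u).
Proof.
  intros HK Hu HD. unfold QQ, F2, RR, DD in *.
  auto_derive. { replace (u*u + (K-p*p)) with (u*u-p*p+K) by ring. repeat (apply Rmult_integral_contrapositive; split); auto; lra. }
  replace (u*u + (K - p*p)) with (u*u - p*p + K) by ring.
  field. lra.
Qed.
Lemma br1 K p : 0 < K -> p <> 0 -> QQ K p p + 16*p/(K*K*K) = 0.
Proof. intros. unfold QQ. replace (p*p + (K - p*p)) with K by ring. field. lra. Qed.
Lemma br2 K c s P : 0 < K -> 0 < c -> 0 < s -> P = s*s - c ->
  - (4/K * ((-s)^6 + ((K - P) - 2*P)*(-s)^4 - (3*P*P + 6*P*(K-P))*(-s)^2 + P*P*(K-P)) / ((-s)^3 * ((-s)*(-s)+(K-P))^3))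
  + 16*P/((c+K)*(c+K)*(c+K)*s) + 4*c/((c+K)*(c+K)*(s*s*s)) = 4*c/(K*(c+K)*(s*s*s)).
Proof.
  intros HK Hc Hs HP. subst P.
  replace ((-s)*(-s) + (K - (s*s-c))) with (c+K) by ring.
  field. repeat split; lra.
Qed.

Lemma F2_cont K p u : DD K p u <> 0 -> continuous (F2 K p) u.
Proof. intros H. apply c2d_snd. apply (F1_props K p u H). Qed.

Lemma F2_pos K p u : 0 < DD K p u -> 0 < F2 K p u.
Proof.
  intros H. unfold F2. set (d := DD K p u) in *.
  assert (0 < d*d*d) by (repeat apply Rmult_lt_0_compat; lra).
  assert (0 < d*d*d*d) by (repeat apply Rmult_lt_0_compat; lra).
  assert (0 < 16 / (d*d*d)) by (apply Rdiv_lt_0_compat; lra).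
  assert (0 <= 96*p*p / (d*d*d*d)).
  { apply Rdiv_le_0_compat; [|lra]. replace (96*p*p) with (96*(p*p)) by ring.
    apply Rmult_le_pos; [lra|apply Rle_0_sqr]. }
  lra.
Qed.

Lemma T2_pos K c p : 0 < K -> 0 < c -> p < sqrt K -> 0 < T2 K c p.
Proof.
  intros HK Hc Hp. destruct (region K p HK Hp) as [r [Hr HD]].
  assert (HL := LL_lt c p Hc). assert (Hpa := Rabs_maj2 p).
  assert (HLp : LL c p < p) by lra.
  assert (Hs := sq_pos c p Hc). assert (Hs2 := sq_sq c p Hc).
  assert (Hex : ex_RInt (fun t => F2 K p t) (LL c p) p).
  { apply (@ex_RInt_continuous R_CompleteNormedModule). intros z Hz.
    rewrite Rmin_left, Rmax_right in Hz by lra.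
    apply F2_cont. apply Rgt_not_eq. apply HD. lra. }
  assert (HA : 0 <= 16*p*p/((c+K)*(c+K)*(c+K)*sqrt(p*p+c))).
  { apply Rdiv_le_0_compat. replace (16*p*p) with (16*(p*p)) by ring.
    apply Rmult_le_pos; [lra|apply Rle_0_sqr]. repeat apply Rmult_lt_0_compat; lra. }
  assert (HC : 0 < 4*c/((c+K)*(c+K)*(sqrt(p*p+c)*sqrt(p*p+c)*sqrt(p*p+c)))).
  { apply Rdiv_lt_0_compat. lra. repeat apply Rmult_lt_0_compat; lra. }
  unfold T2.
  destruct (Rlt_or_le p 0) as [Hn|Hn].
  - assert (HQ : is_RInt (fun u => F2 K p u - RR K p u) (LL c p) p (minus (QQ K p p) (QQ K p (LL c p)))).
    { apply (@is_RInt_derive R_CompleteNormedModule).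
      - intros x Hx. rewrite Rmin_left, Rmax_right in Hx by lra.
        apply QQ_der. auto. lra. apply Rgt_not_eq, HD. lra.
      - intros x Hx. rewrite Rmin_left, Rmax_right in Hx by lra.
        assert (Hd : 0 < DD K p x) by (apply HD; lra).
        apply (@ex_derive_continuous R_AbsRing R_NormedModule).
        unfold F2, RR, DD in *. auto_derive. repeat split; repeat (apply Rmult_integral_contrapositive; split);
        try apply pow_nonzero; lra. }
    assert (HR : ex_RInt (RR K p) (LL c p) p).
    { apply (@ex_RInt_continuous R_CompleteNormedModule). intros x Hx.
      rewrite Rmin_left, Rmax_right in Hx by lra.
      assert (Hd : 0 < DD K p x) by (apply HD; lra).
      apply (@ex_derive_continuous R_AbsRing R_NormedModule).
      unfold RR, DD in *. auto_derive. repeat split; repeat (apply Rmult_integral_contrapositive; split);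
        try apply pow_nonzero; lra. }
    assert (E : RInt (fun t => F2 K p t) (LL c p) p =
       RInt (fun u => F2 K p u - RR K p u) (LL c p) p + RInt (RR K p) (LL c p) p).
    { rewrite <- (@RInt_plus R_CompleteNormedModule). apply RInt_ext. intros; unfold plus; simpl; ring.
      exists (minus (QQ K p p) (QQ K p (LL c p))); exact HQ. exact HR. }
    rewrite E, (is_RInt_unique _ _ _ _ HQ).
    assert (HRp : 0 <= RInt (RR K p) (LL c p) p).
    { apply RInt_ge_0. lra. exact HR. intros x Hx.
      assert (Hd : 0 < DD K p x) by (apply HD; lra).
      unfold RR. apply Rdiv_le_0_compat. apply Rmult_le_pos. lra. apply pow2_ge_0.
      assert (0 < x*x) by nra.
      assert (0 < x^4) by (replace (x^4) with ((x*x)*(x*x)) by ring; apply Rmult_lt_0_compat; lra).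
      apply Rmult_lt_0_compat. apply Rmult_lt_0_compat. lra. apply pow_lt; lra. lra. }
    assert (H1 := br1 K p HK ltac:(lra)).
    assert (H2 : - QQ K p (LL c p) + 16*p*p/((c+K)*(c+K)*(c+K)*sqrt(p*p+c))
       + 4*c/((c+K)*(c+K)*(sqrt(p*p+c)*sqrt(p*p+c)*sqrt(p*p+c)))
       = 4*c/(K*(c+K)*(sqrt(p*p+c)*sqrt(p*p+c)*sqrt(p*p+c)))).
    { unfold QQ, LL. replace (16*p*p) with (16*(p*p)) by ring. apply br2; auto. lra. }
    assert (0 < 4*c/(K*(c+K)*(sqrt(p*p+c)*sqrt(p*p+c)*sqrt(p*p+c)))).
    { apply Rdiv_lt_0_compat. lra. repeat apply Rmult_lt_0_compat; lra. }
    unfold minus, plus, opp; simpl. lra.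
  - assert (0 <= RInt (fun t => F2 K p t) (LL c p) p).
    { apply RInt_ge_0. lra. exact Hex. intros x Hx. left. apply F2_pos, HD. lra. }
    assert (0 <= 16*p/(K*K*K)).
    { apply Rdiv_le_0_compat. lra. repeat apply Rmult_lt_0_compat; lra. }
    lra.
Qed.
Lemma convex_aux (T T1 T2 : R -> R) (b : R) :
  (forall x, x < b -> derivable_pt_lim T x (T1 x) /\ derivable_pt_lim T1 x (T2 x) /\ 0 < T2 x) ->
  forall a1 a2 l, a1 < a2 -> a2 < b -> 0 < l < 1 ->
  T (l*a1 + (1-l)*a2) < l*T a1 + (1-l) * T a2.
Proof.
  intros H a1 a2 l H12 H2b Hl.
  assert (Hinc : forall u v, u < v -> v < b -> T1 u < T1 v).
  { intros u v Huv Hv. destruct (MVT_cor2 T1 T2 u v Huv) as [z [Hz1 Hz2]].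
    intros z Hz. apply H. lra.
    assert (0 < T2 z) by (apply H; lra). nra. }
  set (m := l*a1 + (1-l)*a2).
  assert (Hm1 : a1 < m) by (unfold m; nra). assert (Hm2 : m < a2) by (unfold m; nra).
  destruct (MVT_cor2 T T1 a1 m Hm1) as [x1 [E1 Hx1]]. { intros z Hz. apply H. lra. }
  destruct (MVT_cor2 T T1 m a2 Hm2) as [x2 [E2 Hx2]]. { intros z Hz. apply H. lra. }
  assert (Hlt : T1 x1 < T1 x2) by (apply Hinc; lra).
  assert (Ea : m - a1 = (1-l)*(a2-a1)) by (unfold m; ring).
  assert (Eb : a2 - m = l*(a2-a1)) by (unfold m; ring).
  rewrite Ea in E1. rewrite Eb in E2.
  assert (0 < l*(1-l)*(a2-a1)) by (apply Rmult_lt_0_compat; [apply Rmult_lt_0_compat|]; lra).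
  assert (T a2 - T m - (T m - T a1) * l / (1-l) = 0 \/ True) by auto.
  assert (l*T a1 + (1-l)*T a2 - T m = l*(1-l)*(a2-a1)*(T1 x2 - T1 x1)).
  { replace (T a2) with (T m + T1 x2 * (l*(a2-a1))) by lra.
    replace (T a1) with (T m - T1 x1 * ((1-l)*(a2-a1))) by lra. ring. }
  nra.
Qed.

Lemma convex_from (T T1 T2 : R -> R) (b : R) :
  (forall x, x < b -> derivable_pt_lim T x (T1 x) /\ derivable_pt_lim T1 x (T2 x) /\ 0 < T2 x) ->
  forall a1 a2 l, a1 < b -> a2 < b -> a1 <> a2 -> 0 < l < 1 ->
  T (l*a1 + (1-l)*a2) < l*T a1 + (1-l) * T a2.
Proof.
  intros H a1 a2 l H1 H2 Hne Hl.
  destruct (Rlt_or_le a1 a2) as [H12|H12].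
  - apply (convex_aux T T1 T2 b H); auto.
  - assert (a2 < a1) by lra.
    assert (E := convex_aux T T1 T2 b H a2 a1 (1-l) H0 H1 ltac:(lra)).
    replace (l*a1 + (1-l)*a2) with ((1-l)*a2 + (1-(1-l))*a1) by ring. lra.
Qed.

Definition PHI K p w := RInt (fun u => F0 K p u) p w.

Lemma F0_pos K p u : 0 < DD K p u -> 0 < F0 K p u.
Proof. intros H. unfold F0. apply Rdiv_lt_0_compat. lra. nra. Qed.

Lemma F0_cont K p u : DD K p u <> 0 -> continuous (F0 K p) u.
Proof. intros H. apply c2d_snd. apply (F0_props K p u H). Qed.

Lemma PHI_der K p r w : (forall u, u < r -> 0 < DD K p u) -> p < r -> w < r ->
  is_derive (PHI K p) w (F0 K p w).
Proof.
  intros HD Hp Hw. unfold PHI.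
  apply (@is_derive_RInt R_NormedModule (F0 K p) (PHI K p) p w).
  - exists (mkposreal ((r - w)/2) ltac:(lra)). intros b Hb. simpl in Hb.
    unfold ball in Hb; simpl in Hb; unfold AbsRing_ball, abs, minus, plus, opp in Hb; simpl in Hb.
    apply Rabs_def2 in Hb.
    apply (@RInt_correct R_CompleteNormedModule).
    apply (@ex_RInt_continuous R_CompleteNormedModule). intros z Hz.
    apply F0_cont. apply Rgt_not_eq. apply HD.
    assert (Rmax p b < r) by (apply Rmax_lub_lt; lra). lra.
  - apply F0_cont. apply Rgt_not_eq. apply HD. lra.
Qed.

Lemma PHI_incr K p r u w : (forall u, u < r -> 0 < DD K p u) -> p < r -> u < w -> w < r ->
  PHI K p u < PHI K p w.
Proof.
  intros HD Hp Huw Hw.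
  destruct (MVT_cor2 (PHI K p) (F0 K p) u w Huw) as [z [E Hz]].
  { intros z Hz. apply is_derive_Reals. apply PHI_der with r; auto. lra. }
  assert (0 < F0 K p z) by (apply F0_pos, HD; lra). nra.
Qed.

Lemma PHI_p K p : PHI K p p = 0.
Proof. unfold PHI. exact (@RInt_point R_CompleteNormedModule p _). Qed.

Lemma TT_PHI K c p r : (forall u, u < r -> 0 < DD K p u) -> p < r -> LL c p < p ->
  TT K c p = - PHI K p (LL c p).
Proof.
  intros HD Hp HL. unfold TT, PHI. rewrite <- (@opp_RInt_swap R_CompleteNormedModule). reflexivity.
  apply (@ex_RInt_continuous R_CompleteNormedModule). intros z Hz.
  rewrite Rmin_right, Rmax_left in Hz by lra.
  apply F0_cont. apply Rgt_not_eq. apply HD. lra.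
Qed.


Lemma exist_sol K c p : 0 < K -> 0 < c -> p < sqrt K ->
  exists x v : R -> R, kepler_sol x v (TT K c p) /\ x 0 = 2/K /\ v 0 = p /\
    x (TT K c p) = 2/(c+K) /\ (forall s, 0 < s < TT K c p -> x s <> 2/(c+K)).
Proof.
  intros HK Hc Hp.
  destruct (region K p HK Hp) as [r [Hr HD]].
  assert (HL := LL_lt c p Hc). assert (Hpa := Rabs_maj2 p). assert (HLp : LL c p < p) by lra.
  assert (HT := TT_PHI K c p r HD Hr HLp).
  assert (HDL := DD_LL K c p Hc). assert (Hs2 := sq_sq c p Hc). assert (Hs := sq_pos c p Hc).
  set (L := LL c p) in *.
  assert (HL2 : L * L = p*p + c) by (unfold L, LL; nra).
  set (al := L - 1). set (be := (p + r)/2).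
  assert (Hab : al < be) by (unfold al, be; lra).
  assert (Hbr : be < r) by (unfold be; lra).
  set (phi := PHI K p) in *.
  assert (Hder : forall w, w < r -> derivable_pt_lim phi w (F0 K p w)).
  { intros; apply is_derive_Reals; apply PHI_der with r; auto. }
  assert (Hinc : forall u w, u < w -> w < r -> phi u < phi w).
  { intros; apply PHI_incr with r; auto. }
  assert (Hle : forall u w, u <= w -> w < r -> phi u <= phi w).
  { intros u w H1 H2. destruct H1. left; auto. subst; lra. }
  assert (Hcont : forall w, w < r -> continuity_pt phi w).
  { intros w Hw. apply derivable_continuous_pt. exists (F0 K p w). apply Hder; auto. }
  assert (Hex : forall y, exists u, phi al <= y <= phi be -> al <= u <= be /\ phi u = y).
  { intros y. destruct (Rle_dec (phi al) y) as [H1|H1]; [destruct (Rle_dec y (phi be)) as [H2|H2]|].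
    - destruct (f_interv_is_interv phi al be y Hab (conj H1 H2)) as [u Hu].
      intros z Hz; apply Hcont; lra. exists u; auto.
    - exists al; intros [_ H]; lra.
    - exists al; intros [H _]; lra. }
  set (g := fun y => proj1_sig (constructive_indefinite_description _ (Hex y))).
  assert (Hg : forall y, phi al <= y <= phi be -> al <= g y <= be /\ phi (g y) = y).
  { intros y Hy. unfold g. destruct (constructive_indefinite_description _ (Hex y)) as [u Hu]. simpl. auto. }
  assert (Hgphi : forall u, al <= u <= be -> g (phi u) = u).
  { intros u Hu. assert (Hy : phi al <= phi u <= phi be) by (split; apply Hle; lra).
    destruct (Hg _ Hy) as [Hw Hw2].
    destruct (Rtotal_order (g (phi u)) u) as [H|[H|H]]; auto.
    - assert (phi (g (phi u)) < phi u) by (apply Hinc; lra). lra.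
    - assert (phi u < phi (g (phi u))) by (apply Hinc; lra). lra. }
  assert (Hgcont : forall y, phi al < y < phi be -> continuity_pt g y).
  { intros y Hy. apply (continuity_pt_recip_interv phi g al be Hab).
    - intros; apply Hinc; lra.
    - intros z H1 H2. unfold comp, id. apply Hg; lra.
    - intros z H1 H2. apply Hg; lra.
    - intros; apply Hcont; lra.
    - exact Hy. }
  assert (Hgder : forall y, phi al < y < phi be -> derivable_pt_lim g y (/ F0 K p (g y))).
  { intros y Hy.
    assert (Prf : forall a, g (phi al) <= a <= g (phi be) -> derivable_pt phi a).
    { intros a Ha. rewrite (Hgphi be) in Ha by lra. exists (F0 K p a). apply Hder. lra. }
    assert (Prg_incr : g (phi al) <= g y <= g (phi be)).
    { rewrite (Hgphi al), (Hgphi be) by lra. apply Hg; lra. }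
    assert (Hgy : al <= g y <= be) by (apply Hg; lra).
    assert (Hpos : 0 < F0 K p (g y)) by (apply F0_pos, HD; lra).
    assert (H := derivable_pt_lim_recip_interv phi g (phi al) (phi be) y Prf (Hgcont y Hy)
        ltac:(lra) Hy Prg_incr).
    rewrite (derive_pt_eq_0 phi (g y) (F0 K p (g y)) (Prf (g y) Prg_incr)) in H.
    replace (/ F0 K p (g y)) with (1 / F0 K p (g y)) by (field; lra).
    apply H. intros z Hz. unfold comp, id. apply Hg; lra. lra.
    apply Hder; lra. }
  assert (HphiL : phi al < phi L) by (apply Hinc; unfold al; lra).
  assert (Hphip : phi p < phi be) by (apply Hinc; unfold be; lra).
  assert (Hp0 : phi p = 0) by apply PHI_p.
  set (T := TT K c p) in *.
  assert (HphiLp : phi L < phi p) by (apply Hinc; lra).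
  assert (Hrange : forall s, 0 <= s <= T -> phi al < -s < phi be) by (intros; lra).
  set (v := fun s => g (-s)).
  set (x := fun s => 2 / DD K p (v s)).
  assert (Hvr : forall s, 0 <= s <= T -> al <= v s <= be).
  { intros s Hss. apply Hg. specialize (Hrange s Hss). lra. }
  exists x, v. split; [|split; [|split; [|split]]].
  - intros s Hss. assert (Hv := Hvr s Hss). assert (Hd : 0 < DD K p (v s)) by (apply HD; lra).
    assert (Hvd : derivable_pt_lim v s (- (/ F0 K p (v s)))).
    { apply is_derive_Reals. unfold v.
      replace (- (/ F0 K p (g (-s)))) with (scal (-1) (/ F0 K p (g (-s)))).
      2:{ unfold scal; simpl; unfold mult; simpl; ring. }
      apply (is_derive_comp g Ropp s).
      apply is_derive_Reals, Hgder. apply Hrange; exact Hss.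
      auto_derive; auto. }
    split. unfold x. apply Rdiv_lt_0_compat; lra.
    split.
    + apply is_derive_Reals. unfold x.
      assert (Hh : is_derive (fun w => 2 / DD K p w) (v s) (- (2 * (2 * v s)) / (DD K p (v s) * DD K p (v s)))).
      { unfold DD in *. auto_derive. lra. field. lra. }
      assert (Hc2 := is_derive_comp (fun w => 2 / DD K p w) v s _ _ Hh (proj2 (is_derive_Reals _ _ _) Hvd)).
      match type of Hc2 with is_derive _ _ ?l => replace (v s) with l end.
      exact Hc2. unfold scal; simpl; unfold mult; simpl. unfold F0. field. lra.
    + replace (- / (x s ^ 2)) with (- (/ F0 K p (v s))). exact Hvd.
      unfold x, F0. field. lra.
  - unfold x, v. rewrite Ropp_0, <- Hp0, Hgphi by (unfold al, be; lra). unfold DD. field. lra.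
  - unfold v. rewrite Ropp_0, <- Hp0, Hgphi by (unfold al, be; lra). reflexivity.
  - unfold x, v. rewrite HT, Ropp_involutive, Hgphi by (unfold al, be; lra). rewrite HDL. reflexivity.
  - intros s Hss. unfold x.
    assert (Hv := Hvr s ltac:(lra)).
    assert (Hd : 0 < DD K p (v s)) by (apply HD; lra).
    assert (H1 : L < v s).
    { destruct (Rle_or_lt (v s) L) as [H|H]; auto. exfalso.
      assert (phi (v s) <= phi L) by (apply Hle; lra).
      assert (phi (v s) = - s) by (apply Hg; specialize (Hrange s ltac:(lra)); lra). lra. }
    assert (H2 : v s < p).
    { destruct (Rle_or_lt p (v s)) as [H|H]; auto. exfalso.
      assert (phi p <= phi (v s)) by (apply Hle; lra).
      assert (phi (v s) = - s) by (apply Hg; specialize (Hrange s ltac:(lra)); lra). lra. }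
    intros E. assert (E2 : DD K p (v s) = c + K).
    { apply (f_equal (fun z => 2 / z)) in E. field_simplify in E; try lra. }
    unfold DD in E2. assert (Hpp : p <= Rabs p) by apply Rle_abs.
    assert (0 < (v s - L) * (-L - v s)) by (apply Rmult_lt_0_compat; lra). nra.
Qed.

Lemma const_on (f : R -> R) t : (forall s, 0 <= s <= t -> derivable_pt_lim f s 0) ->
  forall s, 0 <= s <= t -> f s = f 0.
Proof.
  intros H s Hs. destruct (Req_dec s 0) as [E|E]. subst; auto.
  destruct (MVT_cor2 f (fun _ => 0) 0 s ltac:(lra)) as [z [Ez _]].
  intros z Hz. apply H. lra. lra.
Qed.

Lemma uniq_sol K c p t x v : 0 < K -> 0 < c -> p < sqrt K -> 0 < t ->
  kepler_sol x v t -> x 0 = 2/K -> v 0 = p -> x t = 2/(c+K) -> t = TT K c p.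
Proof.
  intros HK Hc Hp Ht Hs Hx0 Hv0 Hxt.
  destruct (region K p HK Hp) as [r [Hr HD]].
  assert (HL := LL_lt c p Hc). assert (Hpa := Rabs_maj2 p). assert (HLp : LL c p < p) by lra.
  assert (Hpp : p <= Rabs p) by apply Rle_abs.
  rewrite (TT_PHI K c p r HD Hr HLp).
  assert (Hs2 := sq_sq c p Hc). assert (Hsp := sq_pos c p Hc).
  assert (HL2 : LL c p * LL c p = p*p + c) by (unfold LL; nra).
  assert (HE : forall s, 0 <= s <= t -> v s * v s - 2 / x s = p*p - K).
  { intros s Hs'.
    rewrite (const_on (fun s => v s * v s - 2 / x s) t); [|clear s Hs'|exact Hs'].
    rewrite Hx0, Hv0. field. lra.
    intros s0 Hs0. destruct (Hs s0 Hs0) as [Hxp [Hxd Hvd]].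
    assert (H := derivable_pt_lim_minus _ _ s0 _ _ (derivable_pt_lim_mult v v s0 _ _ Hvd Hvd)
       (derivable_pt_lim_div (fct_cte 2) x s0 _ _ (derivable_pt_lim_const 2 s0) Hxd ltac:(lra))).
    unfold minus_fct, mult_fct, div_fct, fct_cte in H.
    match type of H with derivable_pt_lim _ _ ?l => replace 0 with l end. exact H.
    unfold Rsqr. field. lra. }
  assert (HDx : forall s, 0 <= s <= t -> DD K p (v s) = 2 / x s).
  { intros s Hs'. specialize (HE s Hs'). unfold DD. lra. }
  assert (Hdec : forall s1 s2, 0 <= s1 -> s1 < s2 -> s2 <= t -> v s2 < v s1).
  { intros s1 s2 H1 H2 H3.
    destruct (MVT_cor2 v (fun s => - / (x s ^ 2)) s1 s2 H2) as [z [Ez Hz]].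
    intros z Hz. apply Hs. lra.
    assert (0 < x z) by (apply Hs; lra).
    assert (0 < / (x z ^ 2)) by (apply Rinv_0_lt_compat; apply pow_lt; lra).
    nra. }
  assert (Hvp : forall s, 0 <= s <= t -> v s <= p).
  { intros s Hs'. destruct (Req_dec s 0). subst; lra. rewrite <- Hv0. left. apply Hdec; lra. }
  assert (Hvt : v t = LL c p).
  { assert (H1 := HDx t ltac:(lra)). rewrite Hxt in H1. unfold DD in H1.
    assert (H2 : v t < p) by (rewrite <- Hv0; apply Hdec; lra).
    replace (2 / (2 / (c+K))) with (c + K) in H1 by (field; lra).
    assert (H3 : (v t - LL c p) * (v t + LL c p) = 0) by nra.
    apply Rmult_integral in H3. destruct H3; lra. }
  set (phi := PHI K p).
  assert (Hpsi := const_on (fun s => phi (v s) + s) t).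
  assert (Hfin : phi (v t) + t = phi (v 0) + 0).
  { apply Hpsi; [|lra]. intros s Hs'. destruct (Hs s Hs') as [Hxp [Hxd Hvd]].
    assert (Hd1 : derivable_pt_lim phi (v s) (F0 K p (v s))).
    { apply is_derive_Reals. apply PHI_der with r; auto. assert (v s <= p) by auto. lra. }
    assert (H := derivable_pt_lim_plus _ _ s _ _ (derivable_pt_lim_comp v phi s _ _ Hvd Hd1) (derivable_pt_lim_id s)).
    unfold plus_fct, comp, id in H.
    match type of H with derivable_pt_lim _ _ ?l => replace 0 with l end. exact H.
    unfold F0. rewrite HDx by auto. field. lra. }
  rewrite Hv0, Hvt in Hfin. assert (phi p = 0) by apply PHI_p. lra.
Qed.

Lemma TT_pos K c p : 0 < K -> 0 < c -> p < sqrt K -> 0 < TT K c p.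
Proof.
  intros HK Hc Hp. destruct (region K p HK Hp) as [r [Hr HD]].
  assert (HL := LL_lt c p Hc). assert (Hpa := Rabs_maj2 p). assert (HLp : LL c p < p) by lra.
  rewrite (TT_PHI K c p r HD Hr HLp).
  assert (PHI K p (LL c p) < PHI K p p) by (apply PHI_incr with r; auto).
  rewrite PHI_p in H. lra.
Qed.

Theorem proposition4 (xA xB : R) (hB : 0 < xB) (hBA : xB < xA) :
  exists TDR : R -> R,
    (* TDR is the (well-defined) direct-arc time function on ]-oo, vE[ *)
    (forall vA, vA < vE xA -> first_hit xA xB vA (TDR vA)) /\
    (forall vA t, vA < vE xA -> first_hit xA xB vA t -> t = TDR vA) /\
    (* values in ]0, oo[ *)
    (forall vA, vA < vE xA -> 0 < TDR vA) /\
    (* strict convexity on ]-oo, vE[ *)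
    (forall a b l, a < vE xA -> b < vE xA -> a <> b -> 0 < l < 1 ->
       TDR (l * a + (1 - l) * b) < l * TDR a + (1 - l) * TDR b) /\
    (* twice differentiable with positive second derivative everywhere *)
    (exists T1 T2 : R -> R,
       forall vA, vA < vE xA ->
         derivable_pt_lim TDR vA (T1 vA) /\
         derivable_pt_lim T1 vA (T2 vA) /\
         0 < T2 vA).
Proof.
  set (K := 2 / xA). set (c := 2 / xB - 2 / xA).
  assert (HA : 0 < xA) by lra.
  assert (HK : 0 < K) by (unfold K; apply Rdiv_lt_0_compat; lra).
  assert (Hc : 0 < c).
  { unfold c. unfold Rdiv. assert (/ xA < / xB) by (apply Rinv_lt_contravar; nra). lra. }
  assert (EA : 2 / K = xA) by (unfold K; field; lra).
  assert (EB : 2 / (c + K) = xB) by (unfold c, K; field; lra).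
  assert (EV : vE xA = sqrt K) by reflexivity.
  rewrite EV.
  assert (Hall : forall x, x < sqrt K -> derivable_pt_lim (TT K c) x (T1 K c x) /\
      derivable_pt_lim (T1 K c) x (T2 K c x) /\ 0 < T2 K c x).
  { intros x Hx. split; [|split].
    - apply is_derive_Reals. apply TT_der; auto.
    - apply is_derive_Reals. apply T1_der; auto.
    - apply T2_pos; auto. }
  exists (TT K c). split; [|split; [|split; [|split]]].
  - intros vA HvA. unfold first_hit. split. apply TT_pos; auto.
    destruct (exist_sol K c vA HK Hc HvA) as [x [v [H1 [H2 [H3 [H4 H5]]]]]].
    exists x, v. rewrite <- EA, <- EB. auto.
  - intros vA t HvA [Ht [x [v [H1 [H2 [H3 [H4 _]]]]]]].
    apply (uniq_sol K c vA t x v); auto. rewrite EA; auto. rewrite EB; auto.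
  - intros vA HvA. apply TT_pos; auto.
  - intros a b l Ha Hb Hab Hl. apply (convex_from (TT K c) (T1 K c) (T2 K c) (sqrt K) Hall); auto.
  - exists (T1 K c), (T2 K c). exact Hall.
Qed.
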